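(* Let $N\ge 1$ be an integer. If a function class $\mathcal{G}$ of functions $\mathcal{Z}\to\mathbb{R}$ is an $N$-composite of a function class $\mathcal{F}$ of functions $\mathcal{X}\to\mathbb{R}$, then $\mathsf{dis}(\mathcal{G}) \le N\,\mathsf{dis}(\mathcal{F})$.
   Context: For a measurable space $\mathcal{X}$ and a class $\mathcal{F}$ of measurable functions $\mathcal{X}\to\mathbb{R}$, the disagreement coefficient is $$\mathsf{dis}(\mathcal{F}) = \sup_{\varepsilon,\delta>0}\ \sup_{\nu\in\Delta(\mathcal{X})} \frac{\delta^2}{\varepsilon^2}\,\mathbb{P}_{p\sim\nu}\Big(\exists f\in\mathcal{F}:\ \mathbb{E}_{q\sim\nu}[f(q)^2]\le\varepsilon^2\ \text{and}\ |f(p)|>\delta\Big),$$ where $\Delta(\mathcal{X})$ is the set of probability measures on $\mathcal{X}$. A class $\mathcal{G}$ of functions $\mathcal{Z}\to\mathbb{R}$ is an $N$-composite of $\mathcal{F}$ (functions $\mathcal{X}\to\mathbb{R}$) if there is a partition of $\mathcal{Z}$ into disjoint measurable sets $\mathcal{Z}_1,\dots,\mathcal{Z}_N$ and measurable maps $h_i:\mathcal{Z}_i\to\mathcal{X}$, $i\in[N]$, such that for every $g\in\mathcal{G}$ there exist $f_1,\dots,f_N\in\mathcal{F}$ with $g(x)=f_i(h_i(x))$ for all $x\in\mathcal{Z}_i$ and all $i\in[N]$. *)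

(* Defs.v *)
From HB Require Import structures.
From mathcomp Require Import all_boot all_order all_algebra.
From mathcomp Require Import all_classical all_reals all_analysis.
Set Implicit Arguments. Unset Strict Implicit. Unset Printing Implicit Defensive.
Import Order.TTheory GRing.Theory Num.Theory.
Local Open Scope classical_set_scope.
Local Open Scope ring_scope.

(* Outer probability of an arbitrary (possibly non-measurable) event:
   inf of nu(A) over measurable supersets A. Agrees with nu(E) when E is
   measurable. *)
Definition outer_prob d (T : measurableType d) (R : realType)
  (nu : probability T R) (E : set T) : \bar R :=
  ereal_inf [set nu A | A in [set A | measurable A /\ E `<=` A]].

Definition dis_event d (T : measurableType d) (R : realType)
  (F : set (T -> R)) (nu : probability T R) (eps delta : R) : set T :=
  [set p | exists f, F f /\
     (\int[nu]_q ((f q) ^+ 2)%:E <= (eps ^+ 2)%:E)%E /\ delta < `|f p|].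

Definition dis d (T : measurableType d) (R : realType) (F : set (T -> R))
  : \bar R :=
  ereal_sup [set x | exists (eps delta : R) (nu : probability T R),
     0 < eps /\ 0 < delta /\
     x = ((delta ^+ 2 / eps ^+ 2)%:E * outer_prob nu (dis_event F nu eps delta))%E].

Definition is_composite dX dZ (X : measurableType dX) (Z : measurableType dZ)
  (R : realType) (N : nat) (G : set (Z -> R)) (F : set (X -> R)) : Prop :=
  exists (Zs : 'I_N -> set Z) (h : 'I_N -> Z -> X),
    (forall i, measurable (Zs i)) /\
    (forall i j, i != j -> Zs i `&` Zs j = set0) /\
    (\bigcup_(i in [set: 'I_N]) Zs i = [set: Z]) /\
    (forall i, measurable_fun (Zs i) (h i)) /\
    (forall g, G g -> exists f : 'I_N -> X -> R,
        (forall i, F (f i)) /\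
        (forall i x, Zs i x -> g x = f i (h i x))).

(* Main.v *)
Require Import Defs.
From HB Require Import structures.
From mathcomp Require Import all_boot all_order all_algebra.
From mathcomp Require Import all_classical all_reals all_analysis.
From mathcomp Require Import measurable_realfun.
From mathcomp.algebra_tactics Require Import ring lra.
Import Order.TTheory GRing.Theory Num.Theory.
Local Open Scope classical_set_scope.
Local Open Scope ring_scope.
Section cpush.
Local Open Scope ereal_scope.
Context {dZ dX : measure_display} {Z : measurableType dZ} {X : measurableType dX}
  {R : realType}.
Variables (nu : {measure set Z -> \bar R}) (D : set Z) (h : Z -> X).
Variables (mD : measurable D) (mh : measurable_fun D h).

Definition cpush of measurable D & measurable_fun D h :=
  fun A : set X => nu (D `&` h @^-1` A).

Let cp := cpush mD mh.

Let cp0 : cp set0 = 0.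
Proof. by rewrite /cp /cpush preimage_set0 setI0 measure0. Qed.

Let cp_ge0 A : 0 <= cp A.
Proof. exact: measure_ge0. Qed.

Let cp_sigma_additive : semi_sigma_additive cp.
Proof.
move=> F mF tF mUF; rewrite /cp /cpush preimage_bigcup setI_bigcupr.
apply: measure_semi_sigma_additive.
- by move=> n; exact: mh.
- apply/trivIsetP => /= i j _ _ ij.
  rewrite setIACA -preimage_setI.
  by move/trivIsetP : tF => /(_ _ _ Logic.I Logic.I ij) ->; rewrite preimage_set0 !setI0.
- by rewrite -setI_bigcupr -preimage_bigcup; exact: mh.
Qed.

HB.instance Definition _ := isMeasure.Build _ _ _ cp
  cp0 cp_ge0 cp_sigma_additive.

End cpush.

Section cpush_int.
Local Open Scope ereal_scope.
Context {dZ dX : measure_display} {Z : measurableType dZ} {X : measurableType dX}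
  {R : realType}.
Variables (nu : {measure set Z -> \bar R}) (D : set Z) (h : Z -> X).
Variables (mD : measurable D) (mh : measurable_fun D h).

Lemma cpush_integral (phi : X -> \bar R) : measurable_fun setT phi ->
  (forall x, 0 <= phi x) ->
  \int[cpush nu D h mD mh]_x phi x = \int[nu]_(z in D) phi (h z).
Proof.
move=> mphi phi0.
have mh' : measurable_fun setT (h \_ D) := (measurable_restrictT h mD).1 mh.
have := ge0_integral_pushforward mh' (mrestr nu mD) measurableT mphi (fun y _ => phi0 y).
rewrite (eq_measure_integral (cpush nu D h mD mh)); last first.
  move=> A mA _; rewrite /pushforward /mrestr /cpush /=; congr (nu _).
  apply/seteqP; split => z [].
    by move=> hz Dz; split => //; move: hz; rewrite /preimage/= patchT// inE.
  by move=> Dz hz; split => //; rewrite /preimage/= patchT// inE.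
move=> ->; rewrite preimage_setT -(setUv D).
rewrite ge0_integral_setU//; last 4 first.
- exact: measurableC.
- by rewrite setUv; apply: measurableT_comp.
- by move=> x _; exact: phi0.
- by rewrite disj_set2E setICr.
rewrite (eq_measure_integral nu); last first.
  by move=> A mA AD; rewrite /= /mrestr setIidl.
rewrite [X in _ + X](eq_measure_integral mzero); last first.
  move=> A mA AD; rewrite /= /mrestr /mzero.
  suff -> : A `&` D = set0 by rewrite measure0.
  by apply/seteqP; split => // z [/AD + Dz].
rewrite integral_measure_zero adde0; apply: eq_integral => z zD /=.
by rewrite patchT.
Qed.

End cpush_int.

Section cprob.
Local Open Scope ereal_scope.
Context {dZ dX : measure_display} {Z : measurableType dZ} {X : measurableType dX}
  {R : realType}.
Variables (nu : probability Z R) (D : set Z) (h : Z -> X).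
Variables (mD : measurable D) (mh : measurable_fun D h) (P : probability X R).
Hypothesis D0 : 0 < nu D.

Lemma nuD_fin : nu D \is a fin_num.
Proof.
by rewrite ge0_fin_numE ?measure_ge0// (le_lt_trans (probability_le1 _ mD)) ?ltry.
Qed.

Lemma q_gt0 : (0 < fine (nu D))%R.
Proof. by rewrite fine_gt0// D0 /= -ge0_fin_numE ?nuD_fin ?measure_ge0. Qed.

Lemma cprobE A : mnormalize (cpush nu D h mD mh) P A =
  nu (D `&` h @^-1` A) * ((fine (nu D))^-1)%:E.
Proof.
rewrite /mnormalize /= /cpush preimage_setT setIT.
have -> : (nu D == 0) = false by apply/negbTE; rewrite gt_eqF.
have -> : (nu D == +oo) = false by apply/negbTE; rewrite -ltey -ge0_fin_numE ?measure_ge0 ?nuD_fin.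
by [].
Qed.

Lemma cprob_integral (phi : X -> \bar R) : measurable_fun setT phi ->
  (forall x, 0 <= phi x) ->
  \int[mnormalize (cpush nu D h mD mh) P]_x phi x =
  ((fine (nu D))^-1)%:E * \int[nu]_(z in D) phi (h z).
Proof.
move=> mphi phi0.
have k0 : (0 <= (fine (nu D))^-1)%R by rewrite invr_ge0 ltW// q_gt0.
rewrite (eq_measure_integral (mscale (NngNum k0) (cpush nu D h mD mh))); last first.
  by move=> A mA _; rewrite [RHS]muleC; exact: cprobE.
by rewrite ge0_integral_mscale//= cpush_integral.
Qed.

End cprob.

Lemma outer_prob_ge0 d (T : measurableType d) (R : realType)
  (nu : probability T R) (E : set T) : (0 <= outer_prob nu E)%E.
Proof. by apply: le_ereal_inf_tmp => _ [A _ <-]; exact: measure_ge0. Qed.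

Lemma outer_prob_le1 d (T : measurableType d) (R : realType)
  (nu : probability T R) (E : set T) : (outer_prob nu E <= 1)%E.
Proof.
by apply: ge_ereal_inf; exists 1%E => //; exists setT => //; rewrite probability_setT.
Qed.

Theorem mainTheorem4 (R : realType) (dX dZ : measure_display)
  (X : measurableType dX) (Z : measurableType dZ) (N : nat)
  (F : set (X -> R)) (G : set (Z -> R)) :
  (0 < N)%N ->
  (forall f, F f -> measurable_fun [set: X] f) ->
  (forall g, G g -> measurable_fun [set: Z] g) ->
  is_composite N G F ->
  (dis G <= N%:R%:E * dis F)%E.
Proof.
move=> N0 mF mG [Zs [h [mZ [disj [cover [mh compG]]]]]].
apply: ge_ereal_sup => _ [e [d [nu [e0 [d0 ->]]]]].
have [z0 _] : [set: Z] !=set0.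
  apply/set0P/negP => /eqP Z0; have := probability_setT nu.
  by rewrite Z0 measure0 => /esym/eqP; rewrite onee_eq0.
have : [set: Z] z0 by [].
rewrite -cover => -[i0 _ Zi0].
pose P0 : probability X R := \d_(h i0 z0).
set DF := dis F.
have Dub : forall (e' d' : R) (mu : probability X R), (0 < e')%R -> (0 < d')%R ->
    ((d' ^+ 2 / e' ^+ 2)%:E * outer_prob mu (dis_event F mu e' d') <= DF)%E.
  by move=> e' d' mu e'0 d'0; apply: ereal_sup_ubound; exists e', d', mu.
have DF0 : (0 <= DF)%E.
  apply: le_trans (Dub 1%R 1%R P0 ltr01 ltr01).
  by apply: mule_ge0; [rewrite lee_fin divr_ge0 // exprn_ge0 | exact: outer_prob_ge0].
have [DFoo|DFoo] := eqVneq DF +oo%E.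
  by rewrite DFoo [X in (_ <= X)%E]muleC gt0_mulye ?leey // lte_fin ltr0n.
have DFfin : DF \is a fin_num by rewrite ge0_fin_numE // ltey.
have [r rE] : exists r, DF = r%:E by exists (fine DF); rewrite fineK.
rewrite rE.
have r0 : (0 <= r)%R by rewrite -lee_fin -rE.
pose c := (r * e ^+ 2 / d ^+ 2)%R.
have c0 : (0 <= c)%R by rewrite /c divr_ge0 ?mulr_ge0 ?exprn_ge0 // ltW.
suff Hout : (outer_prob nu (dis_event G nu e d) <= (N%:R * c)%:E)%E.
  apply: le_trans (lee_wpmul2l _ Hout) _.
    by rewrite lee_fin divr_ge0 // exprn_ge0 // ltW.
  rewrite -EFinM lee_fin le_eqVlt; apply/orP; left; apply/eqP.
  rewrite /c; field.
  by rewrite !gt_eqF.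
apply/lee_addgt0Pr => eta eta0.
pose eta' := (eta / N%:R)%R.
have eta'0 : (0 < eta')%R by rewrite divr_gt0 // ltr0n.
have key : forall i : 'I_N, exists A : set X, [/\ measurable A,
   (nu (Zs i `&` h i @^-1` A) <= (c + eta')%:E)%E &
   forall z f, Zs i z -> F f ->
     (\int[nu]_(x in Zs i) ((f (h i x)) ^+ 2)%:E <= (e ^+ 2)%:E)%E ->
     (d < `|f (h i z)|)%R -> A (h i z)].
  move=> i.
  have [pi0|pi0] := eqVneq (nu (Zs i)) 0%E.
    exists setT; split => //.
    rewrite preimage_setT setIT pi0 lee_fin; apply: addr_ge0 c0 (ltW eta'0).
  have Di0 : (0 < nu (Zs i))%E by rewrite lt0e pi0 measure_ge0.
  have q0 : (0 < fine (nu (Zs i)))%R := q_gt0 nu (Zs i) (mZ i) Di0.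
  move: q0; set q := fine (nu (Zs i)) => q0.
  pose nui : probability X R := mnormalize (cpush nu (Zs i) (h i) (mZ i) (mh i)) P0.
  pose ei := Num.sqrt (e ^+ 2 / q).
  have ei2 : (ei ^+ 2 = e ^+ 2 / q)%R by rewrite sqr_sqrtr // divr_ge0 // ?exprn_ge0 // ltW.
  have ei0 : (0 < ei)%R by rewrite sqrtr_gt0 divr_gt0 // exprn_gt0.
  pose Ei := dis_event F nui ei d.
  have ub := Dub ei d nui ei0 d0.
  rewrite -/Ei rE in ub.
  have o0 := @outer_prob_ge0 _ _ _ nui Ei.
  have o1 := @outer_prob_le1 _ _ _ nui Ei.
  have ofin : outer_prob nui Ei \is a fin_num.
    by rewrite ge0_fin_numE // (le_lt_trans o1) ?ltry.
  have [ro oE] : exists ro, outer_prob nui Ei = ro%:E.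
    by exists (fine (outer_prob nui Ei)); rewrite fineK.
  rewrite oE -EFinM lee_fin in ub.
  have : (outer_prob nui Ei < (ro + eta' / q)%:E)%E.
    by rewrite oE lte_fin ltrDl divr_gt0.
  move=> /ereal_inf_lt[_ [A [mA EA] <-]] nuiA.
  exists A; split => //.
    have nE : nui A = (nu (Zs i `&` h i @^-1` A) * (q^-1)%:E)%E by exact: cprobE.
    rewrite nE in nuiA.
    have Bfin : nu (Zs i `&` h i @^-1` A) \is a fin_num.
      rewrite ge0_fin_numE ?measure_ge0 // (le_lt_trans (probability_le1 _ _)) ?ltry //.
      by apply: (mh i (mZ i)).
    have [b bE] : exists b, nu (Zs i `&` h i @^-1` A) = b%:E.
      by exists (fine (nu (Zs i `&` h i @^-1` A))); rewrite fineK.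
    rewrite bE -EFinM lte_fin -/q in nuiA.
    rewrite bE lee_fin.
    have h1 : (b < q * ro + eta')%R.
      rewrite -(ltr_pM2l q0) in nuiA.
      have E1 : (q * (b * q^-1) = b)%R by field; rewrite gt_eqF.
      have E2 : (q * (ro + eta' / q) = q * ro + eta')%R by field; rewrite gt_eqF.
      by rewrite -E1 -E2.
    have h2 : (q * ro <= c)%R.
      rewrite -subr_ge0.
      have -> : (c - q * ro = e ^+ 2 / d ^+ 2 * (r - d ^+ 2 / ei ^+ 2 * ro))%R.
        rewrite ei2 /c; field.
        by rewrite ?gt_eqF ?exprn_gt0 ?mulf_neq0 ?expf_neq0 ?gt_eqF.
      by rewrite mulr_ge0 ?subr_ge0 // divr_ge0 // exprn_ge0 // ltW.
    lra.
  - move=> z f Zz Ff intf dlt; apply: EA.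
    exists f; split => //; split => //.
    rewrite /nui (cprob_integral _ _ _ _ _ _ Di0); last 2 first.
    + by apply/measurable_EFinP; apply: measurable_funX; exact: mF.
    + by move=> x; rewrite lee_fin sqr_ge0.
    apply: le_trans (lee_wpmul2l _ intf) _; first by rewrite lee_fin invr_ge0 ltW.
    by rewrite -EFinM ei2 mulrC -/q.
case: (boolp.choice key) => A HA.
pose B i := Zs i `&` h i @^-1` A i.
have mB : forall i, measurable (B i).
  by move=> i; apply: mh => //; case: (HA i).
have EGsub : dis_event G nu e d `<=` \big[setU/set0]_(i < N) B i.
  move=> z [g [Gg [intg dlt]]].
  have : [set: Z] z by [].
  rewrite -cover => -[j _ Zj].
  have [fs [Ffs gfs]] := compG g Gg.
  rewrite (bigD1 j) //=; left; split => //.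
  case: (HA j) => _ _ incl; apply: (incl z (fs j) Zj (Ffs j)); last by rewrite -gfs.
  rewrite (eq_integral (fun x => ((g x) ^+ 2)%:E)); last first.
    by move=> x; rewrite inE => Zx; rewrite -gfs.
  apply: le_trans intg.
  apply: (ge0_subset_integral _ (mZ j) measurableT) => //.
  + by apply/measurable_EFinP; apply: measurable_funX; exact: mG.
  + by move=> x _; rewrite lee_fin sqr_ge0.
apply: (@le_trans _ _ (nu (\big[setU/set0]_(i < N) B i))).
  apply: ge_ereal_inf; exists (nu (\big[setU/set0]_(i < N) B i)) => //.
  exists (\big[setU/set0]_(i < N) B i) => //; split => //.
  by apply: bigsetU_measurable => i _; exact: mB.
rewrite measure_bigsetU_ord //; last first.
  apply/trivIsetP => i j _ _ ij; by rewrite /B setIACA disj // set0I.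
apply: (@le_trans _ _ (\sum_(i < N) (c + eta')%:E)%E).
  by apply: lee_sum => i _; case: (HA i).
rewrite sumEFin sumr_const card_ord -EFinD lee_fin le_eqVlt; apply/orP; left.
apply/eqP; rewrite -mulr_natl /eta'; field.
by rewrite pnatr_eq0 -lt0n.
Qed.
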